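(* Let $G = (V, E, b, c)$ be a weighted hypergraph and run procedure COVER on the stream of its edges. For every integer $r$, the edge collection $S(r) = \{ e \in E \mid \exists v \in V \text{ with } \mathrm{eff}_\infty(v) = r \text{ and } \mathrm{eid}_\infty(v) = \mathrm{id}(e) \}$ satisfies \[ c(S(r)) < b(V) / 2^{r-1}. \]
   Context: A weighted hypergraph $G = (V, E, b, c)$ has vertex set $V$, a multiset $E$ of non-empty edges $e \subseteq V$, benefits $b : V \to \mathbb{Q}_{>0}$ and costs $c : E \to \mathbb{Q}_{>0}$; $b(U) = \sum_{v \in U} b(v)$, $c(F) = \sum_{e \in F} c(e)$. Edges arrive in a stream $e_0, e_1, \dots$, and $\mathrm{id}(e)$ is a unique identifier of edge $e$. Procedure COVER maintains for each $v \in V$ a variable $\mathrm{eid}(v)$ (initially NULL) and an integer variable $\mathrm{eff}(v)$ (initially $-\infty$); $\mathrm{eff}_t(v)$ denotes its value just before $e_t$ is processed, and $\mathrm{eff}_\infty(v)$, $\mathrm{eid}_\infty(v)$ the values after the whole stream has been processed. For $T \subseteq e_t$ the level is $\mathrm{lev}_t(T) = \lceil \lg (b(T)/c(e_t)) \rceil$ ($\lg$ = base-2 logarithm), and $T$ is effective at time $t$ if $\mathrm{lev}_t(T) > \mathrm{eff}_t(v)$ for every $v \in T$ (the empty set is vacuously effective). When $e_t$ arrives, COVER computes an effective subset $T \subseteq e_t$ of largest benefit $b(T)$ (any such subset) and, for every $v \in T$, sets $\mathrm{eid}(v) \leftarrow \mathrm{id}(e_t)$ and $\mathrm{eff}(v)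 \leftarrow \mathrm{lev}_t(T)$. *)

(* Defs.v *)
(* Model of procedure COVER (relational, since COVER may pick
   any maximum-benefit effective subset). *)
From mathcomp Require Import all_boot all_order all_algebra.
Set Implicit Arguments. Unset Strict Implicit. Unset Printing Implicit Defensive.
Import Order.TTheory GRing.Theory Num.Theory.
Local Open Scope ring_scope.

Definition is_ceil_lg (x : rat) (k : int) : Prop :=
  (2%:R ^ (k - 1) < x) && (x <= 2%:R ^ k).

(* eff values live in Z ∪ {-oo}; None encodes -oo *)
Definition lt_eff (e : option int) (k : int) : bool :=
  if e is Some j then j < k else true.

Definition bsum (V : finType) (b : V -> rat) (T : {set V}) : rat :=
  \sum_(v in T) b v.

(* T is effective at the current time, for an edge of cost ct, w.r.t. eff:
   lev(T) > eff(v) for all v in T, where lev(T) = ceil(lg(b(T)/ct)).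
   (Vacuous for T = set0.) *)
Definition effective (V : finType) (b : V -> rat) (eff : V -> option int)
    (ct : rat) (T : {set V}) : Prop :=
  forall k : int, is_ceil_lg (bsum b T / ct) k ->
    forall v, v \in T -> lt_eff (eff v) k.

Definition cover_step (V : finType) (b : V -> rat) (e : {set V}) (ct : rat)
    (t : nat) (eff : V -> option int) (eid : V -> option nat)
    (eff' : V -> option int) (eid' : V -> option nat) : Prop :=
  exists T : {set V},
    [/\ T \subset e,
        effective b eff ct T,
        (forall T' : {set V}, T' \subset e -> effective b eff ct T' ->
            bsum b T' <= bsum b T) &
        (forall v,
          (v \in T -> eid' v = Some t /\
                      exists k, eff' v = Some k /\ is_ceil_lg (bsum b T / ct) k) /\
          (v \notin T -> eid' v = eid v /\ eff' v = eff v))].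

(* A complete run of COVER on the stream e_0,...,e_{n-1} (costs c t, id(e_t) = t),
   ending in the final state (eff_inf, eid_inf). *)
Definition cover_run (V : finType) (b : V -> rat) (e : nat -> {set V})
    (c : nat -> rat) (n : nat)
    (eff_inf : V -> option int) (eid_inf : V -> option nat) : Prop :=
  exists (eff : nat -> V -> option int) (eid : nat -> V -> option nat),
    [/\ (forall v, eff 0%N v = None /\ eid 0%N v = None),
        (forall t, (t < n)%N ->
           cover_step b (e t) (c t) t (eff t) (eid t) (eff t.+1) (eid t.+1)),
        eff n = eff_inf &
        eid n = eid_inf].

(* Main.v *)
Require Import Defs.
From mathcomp Require Import all_boot all_order all_algebra zify.
Import Order.TTheory GRing.Theory Num.Theory.
Local Open Scope ring_scope.

Lemma ceil_uniq (x : rat) (k j : int) : is_ceil_lg x k -> is_ceil_lg x j -> k = j.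
Proof.
have H : forall k j : int, k < j -> is_ceil_lg x k -> is_ceil_lg x j -> False.
  move=> k0 j0 kj /andP[_ h1] /andP[h2 _].
  have : (2%:R : rat) ^ k0 <= 2%:R ^ (j0 - 1).
    rewrite ler_eXz2l //; lia.
  move=> h3.
  have := lt_le_trans h2 (le_trans h1 h3); by rewrite ltxx.
move=> hk hj; case: (ltgtP k j) => // kj.
- by case: (H _ _ kj hk hj).
- by case: (H _ _ kj hj hk).
Qed.

Lemma sum_mono (I : finType) (P P' : pred I) (F : I -> rat) :
  (forall i, 0 <= F i) -> (forall i, P' i -> P i) ->
  \sum_(i | P' i) F i <= \sum_(i | P i) F i.
Proof.
move=> F0 H; rewrite [X in X <= _]big_mkcond [X in _ <= X]big_mkcond /=.
apply: ler_sum => i _; case: (boolP (P' i)) => h; first by rewrite (H _ h).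
by case: (P i).
Qed.

Lemma sum_or (I : finType) (P P' Q : pred I) (F : I -> rat) :
  (forall i, 0 <= F i) -> (forall i, P' i -> P i || Q i) ->
  \sum_(i | P' i) F i <= \sum_(i | P i) F i + \sum_(i | Q i) F i.
Proof.
move=> F0 H; rewrite big_mkcond [X in _ <= X + _]big_mkcond
  [X in _ <= _ + X]big_mkcond /= -big_split /=.
apply: ler_sum => i _; case: (boolP (P' i)) => h.
  by move: (H _ h); case: (P i); case: (Q i) => //= _; rewrite ?addr0 ?add0r ?lerDl.
by case: (P i); case: (Q i); rewrite ?addr0 ?add0r ?addr_ge0.
Qed.

Lemma bsum_le (V : finType) (b : V -> rat) (A B : {set V}) :
  (forall v, 0 < b v) -> (forall v, v \in A -> v \in B) -> bsum b A <= bsum b B.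
Proof.
move=> b0 H; rewrite /bsum; apply: sum_mono => // v; exact: ltW.
Qed.

Lemma bsum_disj (V : finType) (b : V -> rat) (A T B : {set V}) :
  (forall v, 0 < b v) ->
  (forall v, v \in A -> v \in T -> False) ->
  (forall v, v \in A -> v \in B) -> (forall v, v \in T -> v \in B) ->
  bsum b A + bsum b T <= bsum b B.
Proof.
move=> b0 D HA HT; rewrite /bsum big_mkcond [X in _ + X]big_mkcond
  [X in _ <= X]big_mkcond /= -big_split /=.
apply: ler_sum => v _.
case: (boolP (v \in A)) => hA; case: (boolP (v \in T)) => hT.
- by case: (D _ hA hT).
- by rewrite (HA _ hA) addr0.
- by rewrite (HT _ hT) add0r.
- by rewrite addr0; case: (v \in B) => //; apply: ltW.
Qed.

Lemma sum_eq_m (n m : nat) (c : nat -> rat) : (m < n)%N ->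
  \sum_(t < n | val t == m) c t = c m.
Proof.
move=> Hm; rewrite (big_pred1 (Ordinal Hm)) //= => t.
Qed.

Section Main.
Variables (V : finType) (b : V -> rat) (n : nat) (e : nat -> {set V})
    (c : nat -> rat) (r : int).
Hypothesis b0 : forall v, 0 < b v.
Hypothesis c0 : forall t, (t < n)%N -> 0 < c t.

Definition Pw (eff : V -> option int) (eid : V -> option nat) (t : 'I_n) : bool :=
  [exists v, (eff v == Some r) && (eid v == Some (nat_of_ord t))].
Definition Ssum eff eid := \sum_(t < n | Pw eff eid t) c t.
Definition Bset (eff : V -> option int) := [set v | ~~ lt_eff (eff v) r].
Definition pw : rat := 2%:R ^ (r - 1).

Definition Inv eff eid :=
  pw * Ssum eff eid <= bsum b (Bset eff) /\
  (0 < Ssum eff eid -> pw * Ssum eff eid < bsum b (Bset eff)).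

Lemma cge0 (t : 'I_n) : 0 <= c t.
Proof. apply: ltW; apply: c0; exact: ltn_ord. Qed.

Lemma pw_gt0 : 0 < pw.
Proof. by apply: exprz_gt0. Qed.

Lemma step_inv m eff eid eff' eid' : (m < n)%N ->
  cover_step b (e m) (c m) m eff eid eff' eid' ->
  Inv eff eid -> Inv eff' eid'.
Proof.
move=> Hm [T [Hsub Heff Hmax Hv]] [I1 I2].
have cm0 := c0 m Hm.
have mono : forall v, v \in Bset eff -> v \in Bset eff'.
  move=> v; rewrite !inE; case: (boolP (v \in T)) => vT.
    have [_ [k [-> hk]]] := (Hv v).1 vT.
    have := Heff k hk v vT; case: (eff v) => // j /= jk.
    rewrite -!leNgt => rj; exact: le_trans rj (ltW jk).
  by have [_ ->] := (Hv v).2 vT.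
have Bmono : bsum b (Bset eff) <= bsum b (Bset eff') by apply: bsum_le.
have Sge0 : forall eff eid, 0 <= Ssum eff eid.
  by move=> ? ?; apply: sumr_ge0 => t _; apply: cge0.
case: (boolP ((2%:R ^ (r - 1) < bsum b T / c m) && (bsum b T / c m <= 2%:R ^ r))) => hr.
- have hr' : is_ceil_lg (bsum b T / c m) r by [].
  have HS : Ssum eff' eid' <= Ssum eff eid + c m.
    rewrite /Ssum -(@sum_eq_m n m c Hm); apply: sum_or; first by move=> t; apply: cge0.
    move=> t /existsP [v /andP [/eqP ev /eqP dv]].
    case: (boolP (v \in T)) => vT.
      have [hid _] := (Hv v).1 vT; rewrite hid in dv; case: dv => ->.
      by rewrite eqxx orbT.
    have [h1 h2] := (Hv v).2 vT; apply/orP; left; apply/existsP; exists v.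
    by rewrite -h1 -h2 ev dv !eqxx.
  have Hc : pw * c m < bsum b T.
    by rewrite /pw -ltr_pdivlMr //; case/andP: hr.
  have HB : bsum b (Bset eff) + bsum b T <= bsum b (Bset eff').
    apply: bsum_disj => // v.
    + rewrite inE => hv vT; have := Heff r hr' v vT; by rewrite (negbTE hv).
    + move=> vT; rewrite inE; have [_ [k [-> hk]]] := (Hv v).1 vT.
      by rewrite (@ceil_uniq _ _ _ hk hr') /= ltxx.
  have Hlt : pw * Ssum eff' eid' < bsum b (Bset eff').
    apply: le_lt_trans (_ : pw * Ssum eff' eid' <= pw * Ssum eff eid + pw * c m) _.
      by rewrite -mulrDr ler_wpM2l // ltW // pw_gt0.
    apply: lt_le_trans HB; exact: ler_ltD I1 Hc.
  by split => //; apply: ltW.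
- have HS : Ssum eff' eid' <= Ssum eff eid.
    apply: sum_mono; first by move=> t; apply: cge0.
    move=> t /existsP [v /andP [/eqP ev /eqP dv]].
    case: (boolP (v \in T)) => vT.
      have [_ [k [ek hk]]] := (Hv v).1 vT; rewrite ek in ev; case: ev => ekr.
      by rewrite ekr in hk; rewrite hk in hr.
    have [h1 h2] := (Hv v).2 vT; apply/existsP; exists v.
    by rewrite -h1 -h2 ev dv !eqxx.
  have HpS : pw * Ssum eff' eid' <= pw * Ssum eff eid.
    by rewrite ler_wpM2l // ltW // pw_gt0.
  split; first by apply: le_trans HpS (le_trans I1 Bmono).
  move=> S0; apply: le_lt_trans HpS _; apply: lt_le_trans Bmono.
  by apply: I2; apply: lt_le_trans S0 HS.
Qed.
End Main.

Theorem lemma9 (V : finType) (b : V -> rat) (n : nat) (e : nat -> {set V})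
    (c : nat -> rat) (eff_inf : V -> option int) (eid_inf : V -> option nat) :
  (0 < #|V|)%N ->
  (forall v, 0 < b v) ->
  (forall t, (t < n)%N -> e t != set0) ->
  (forall t, (t < n)%N -> 0 < c t) ->
  cover_run b e c n eff_inf eid_inf ->
  forall r : int,
    \sum_(t < n | [exists v, (eff_inf v == Some r) && (eid_inf v == Some (nat_of_ord t))])
       c t
    < bsum b [set: V] / 2%:R ^ (r - 1).
Proof.
move=> V0 b0 _ c0 [eff [eid [H0 Hst Hn1 Hn2]]] r.
have Hinv : forall m, (m <= n)%N -> Inv V b n c r (eff m) (eid m).
  elim=> [_|m IH Hm].
    have SE : Ssum V n c r (eff 0%N) (eid 0%N) = 0.
      rewrite /Ssum big_pred0 // => t; apply/existsP => -[v].
      by rewrite (H0 v).1.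
    rewrite /Inv SE mulr0 ltxx; split=> //.
    by rewrite /bsum sumr_ge0 // => v _; apply: ltW.
  apply: (@step_inv V b n e c r b0 c0 m _ _ _ _ Hm (Hst m Hm)); exact: IH (ltnW Hm).
have [I1 I2] := Hinv n (leqnn n); rewrite Hn1 Hn2 in I1 I2.
rewrite ltr_pdivlMr; last by apply: exprz_gt0.
have BT : bsum b (Bset V r eff_inf) <= bsum b [set: V] by apply: bsum_le.
set S := \sum_(t < n | _) c t.
have -> : S * 2%:R ^ (r - 1) = pw r * Ssum V n c r eff_inf eid_inf by rewrite mulrC.
case: (ltrP 0 (Ssum V n c r eff_inf eid_inf)) => hS.
  exact: lt_le_trans (I2 hS) BT.
have -> : Ssum V n c r eff_inf eid_inf = 0.
  apply/eqP; rewrite eq_le hS /=; apply: sumr_ge0 => t _; exact: ltW (c0 _ (ltn_ord t)).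
rewrite mulr0.
have [v _] : exists v : V, true by move: V0; rewrite -cardsT card_gt0 => /set0Pn [v _]; exists v.
apply: lt_le_trans (b0 v) _.
have -> : b v = bsum b [set v] by rewrite /bsum big_set1.
by apply: bsum_le.
Qed.
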